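(* For $t>0$ and $c>0$ let $f(t)=2\,\mathrm{arsh}\bigl(c\,\mathrm{sh}(t/2)\bigr)$ and $g(t)=ct$. If $c\in(0,1)$, then $f(t)/g(t)$ is an increasing function from $(0,\infty)$ to $(1,1/c)$; if $c>1$, then $f(t)/g(t)$ is a decreasing function from $(0,\infty)$ to $(1/c,1)$. In particular, for $c\in(0,1)$ and $t\ge0$, \[ ct\le 2\,\mathrm{arsh}\bigl(c\,\mathrm{sh}(t/2)\bigr)\le t, \] and for $c>1$ and $t\ge0$, \[ t\le 2\,\mathrm{arsh}\bigl(c\,\mathrm{sh}(t/2)\bigr)\le ct. \]
   Context: $\mathrm{sh}$ is the hyperbolic sine and $\mathrm{arsh}$ its inverse. *)

(* Defs.v *)
From Stdlib Require Import Reals.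
Open Scope R_scope.

Definition fP (c t : R) : R := 2 * arcsinh (c * sinh (t / 2)).
Definition gP (c t : R) : R := c * t.
Definition ratioP (c t : R) : R := fP c t / gP c t.

(* Main.v *)
Require Import Defs.
From Stdlib Require Import Reals Lra Psatz.
Open Scope R_scope.

Definition F (c u : R) := arcsinh (c * sinh u).
Definition D (c u : R) := c * cosh u / sqrt ((c * sinh u)^2 + 1).

Lemma F_deriv c u : derivable_pt_lim (F c) u (D c u).
Proof.
  unfold F, D.
  replace (c * cosh u / sqrt ((c * sinh u) ^ 2 + 1)) with
    (/ sqrt ((c * sinh u) ^ 2 + 1) * (c * cosh u)) by (unfold Rdiv; ring).
  apply (derivable_pt_lim_comp (fun x => c * sinh x) arcsinh u).
  - apply (derivable_pt_lim_scal sinh c u). apply derivable_pt_lim_sinh.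
  - apply derivable_pt_lim_arcsinh.
Qed.

Lemma cosh_sq u : cosh u * cosh u = 1 + sinh u * sinh u.
Proof.
  unfold cosh, sinh.
  assert (H : exp u * exp (- u) = 1) by (rewrite <- exp_plus, Rplus_opp_r, exp_0; reflexivity).
  nra.
Qed.

Lemma cosh_pos u : 0 < cosh u.
Proof. unfold cosh. pose proof (exp_pos u). pose proof (exp_pos (-u)). lra. Qed.

Lemma sinh_nonneg u : 0 <= u -> 0 <= sinh u.
Proof. intros [H|H]. - rewrite <- sinh_0. left; apply sinh_lt; auto. - subst; rewrite sinh_0; lra. Qed.

Lemma sinh_pos u : 0 < u -> 0 < sinh u.
Proof. intros H. rewrite <- sinh_0. apply sinh_lt; auto. Qed.

Lemma div_lt x y p q : 0 < p -> 0 < q -> x * q < y * p -> x / p < y / q.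
Proof.
  intros Hp Hq H.
  replace (x / p) with (x * q * / (p * q)) by (field; lra).
  replace (y / q) with (y * p * / (p * q)) by (field; lra).
  apply Rmult_lt_compat_r; [apply Rinv_0_lt_compat; nra | exact H].
Qed.

Lemma sq_lt p q : 0 <= p -> 0 <= q -> p * p < q * q -> p < q.
Proof. intros; nra. Qed.

Lemma D_diff c a b : 0 < c -> 0 <= a -> a < b ->
  let sa := sinh a in let sb := sinh b in
  exists P Q, 0 < P /\ 0 < Q /\ 0 < c * cosh a * Q /\ 0 < c * cosh b * P /\
   D c a = c * cosh a / P /\ D c b = c * cosh b / Q /\
   (c * cosh b * P) * (c * cosh b * P) - (c * cosh a * Q) * (c * cosh a * Q)
     = c * c * (1 - c * c) * (sb * sb - sa * sa) /\ sa * sa < sb * sb.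
Proof.
  intros Hc Ha Hab sa sb.
  assert (Hsa : 0 <= sa) by (apply sinh_nonneg; lra).
  assert (Hsab : sa < sb) by (apply sinh_lt; lra).
  set (P := sqrt ((c * sa)^2 + 1)). set (Q := sqrt ((c * sb)^2 + 1)).
  assert (HP : P * P = c * c * (sa * sa) + 1) by (unfold P; rewrite sqrt_sqrt; nra).
  assert (HQ : Q * Q = c * c * (sb * sb) + 1) by (unfold Q; rewrite sqrt_sqrt; nra).
  assert (P0 : 0 < P) by (unfold P; apply sqrt_lt_R0; nra).
  assert (Q0 : 0 < Q) by (unfold Q; apply sqrt_lt_R0; nra).
  pose proof (cosh_pos a); pose proof (cosh_pos b).
  exists P, Q. repeat split; auto.
  - apply Rmult_lt_0_compat; [apply Rmult_lt_0_compat|]; auto.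
  - apply Rmult_lt_0_compat; [apply Rmult_lt_0_compat|]; auto.
  - replace ((c * cosh b * P) * (c * cosh b * P) - (c * cosh a * Q) * (c * cosh a * Q))
      with (c * c * ((cosh b * cosh b) * (P * P) - (cosh a * cosh a) * (Q * Q))) by ring.
    rewrite HP, HQ, !cosh_sq. fold sa sb. ring.
  - nra.
Qed.

Lemma D_incr c a b : 0 < c < 1 -> 0 <= a -> a < b -> D c a < D c b.
Proof.
  intros Hc Ha Hab.
  destruct (D_diff c a b) as (P & Q & P0 & Q0 & X & Y & -> & -> & E & S); try lra.
  apply div_lt; auto. apply sq_lt; try lra.
  assert (0 < c * c * (1 - c * c) * (sinh b * sinh b - sinh a * sinh a)).
  { apply Rmult_lt_0_compat; [|lra]. apply Rmult_lt_0_compat; nra. }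
  lra.
Qed.

Lemma D_decr c a b : 1 < c -> 0 <= a -> a < b -> D c b < D c a.
Proof.
  intros Hc Ha Hab.
  destruct (D_diff c a b) as (P & Q & P0 & Q0 & X & Y & -> & -> & E & S); try lra.
  apply div_lt; auto. apply sq_lt; try lra.
  assert (0 < c * c * (c * c - 1) * (sinh b * sinh b - sinh a * sinh a)).
  { apply Rmult_lt_0_compat; [|lra]. apply Rmult_lt_0_compat; nra. }
  lra.
Qed.

Lemma D0 c : 0 < c -> D c 0 = c.
Proof. intros. unfold D. rewrite cosh_0, sinh_0. replace ((c*0)^2+1) with 1 by ring.
  rewrite sqrt_1. field. Qed.

Lemma F0 c : F c 0 = 0.
Proof. unfold F. rewrite sinh_0, Rmult_0_r. apply arcsinh_0. Qed.

Lemma conv (G E : R -> R) : (forall u, derivable_pt_lim G u (E u)) -> G 0 = 0 ->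
  (forall a b, 0 <= a -> a < b -> E a < E b) ->
  (forall s t, 0 < s -> s < t -> t * G s < s * G t) /\
  (forall u, 0 < u -> E 0 * u < G u /\ G u < E u * u).
Proof.
  intros HG G0 HE. split.
  - intros s t Hs Hst.
    destruct (MVT_cor2 G E 0 s Hs (fun x _ => HG x)) as (x1 & H1 & I1).
    destruct (MVT_cor2 G E s t Hst (fun x _ => HG x)) as (x2 & H2 & I2).
    assert (E x1 < E x2) by (apply HE; lra).
    rewrite G0 in H1.
    assert (Gs : G s = E x1 * s) by lra.
    assert (Gt : G t = E x1 * s + E x2 * (t - s)) by lra.
    rewrite Gs, Gt.
    assert (0 < s * (t - s) * (E x2 - E x1)) by (apply Rmult_lt_0_compat; [apply Rmult_lt_0_compat|]; lra).
    nra.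
  - intros u Hu.
    destruct (MVT_cor2 G E 0 u Hu (fun x _ => HG x)) as (x1 & H1 & I1).
    rewrite G0 in H1.
    assert (E 0 < E x1) by (apply HE; lra).
    assert (E x1 < E u) by (apply HE; lra).
    split; nra.
Qed.

Lemma convF_inc c : 0 < c < 1 ->
  (forall s t, 0 < s -> s < t -> t * F c s < s * F c t) /\
  (forall u, 0 < u -> c * u < F c u /\ F c u < D c u * u).
Proof.
  intros Hc. destruct (conv (F c) (D c) (F_deriv c) (F0 c)) as [A B].
  - intros; apply D_incr; auto.
  - split; auto. intros u Hu. rewrite <- (D0 c) at 1 by lra. auto.
Qed.

Lemma convF_dec c : 1 < c ->
  (forall s t, 0 < s -> s < t -> s * F c t < t * F c s) /\
  (forall u, 0 < u -> F c u < c * u /\ D c u * u < F c u).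
Proof.
  intros Hc. destruct (conv (fun u => - F c u) (fun u => - D c u)) as [A B].
  - intros u. apply derivable_pt_lim_opp. apply F_deriv.
  - rewrite F0; ring.
  - intros a b Ha Hab. pose proof (D_decr c a b Hc Ha Hab). lra.
  - split.
    + intros s t Hs Hst. specialize (A s t Hs Hst). lra.
    + intros u Hu. specialize (B u Hu). rewrite D0 in B by lra. lra.
Qed.


Lemma ln_le' x y : 0 < x -> x <= y -> ln x <= ln y.
Proof. intros Hx [H|H]. - left; apply ln_increasing; auto. - subst; lra. Qed.

Lemma c_cosh c u : 0 < c -> c * cosh u = sqrt ((c * sinh u)^2 + c * c).
Proof.
  intros Hc. rewrite <- (sqrt_pow2 (c * cosh u)).
  - f_equal. replace ((c * cosh u)^2) with (c * c * (cosh u * cosh u)) by ring.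
    rewrite cosh_sq. ring.
  - pose proof (cosh_pos u). nra.
Qed.

Lemma sinh_cosh_exp u : sinh u + cosh u = exp u.
Proof. unfold sinh, cosh. field. Qed.

Lemma F_log_lo c u : 0 < c <= 1 -> ln c + u <= F c u.
Proof.
  intros Hc. unfold F, arcsinh.
  rewrite <- (ln_exp u) at 1. rewrite <- ln_mult by (try lra; apply exp_pos).
  apply ln_le'. { pose proof (exp_pos u). nra. }
  rewrite <- sinh_cosh_exp, Rmult_plus_distr_l, c_cosh by lra.
  apply Rplus_le_compat_l. apply sqrt_le_1_alt. nra.
Qed.

Lemma F_log_hi c u : 1 <= c -> F c u <= ln c + u.
Proof.
  intros Hc. unfold F, arcsinh.
  rewrite <- (ln_exp u) at 3. rewrite <- ln_mult by (try lra; apply exp_pos).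
  assert (0 < c * sinh u + sqrt ((c * sinh u) ^ 2 + 1)).
  { pose proof (cosh_pos u) as Hp. pose proof (c_cosh 1 u) as E.
    assert (Hs : sqrt ((c * sinh u) ^ 2 ) < sqrt ((c * sinh u) ^ 2 + 1)).
    { apply sqrt_lt_1_alt. split; [apply pow2_ge_0|lra]. }
    assert (Ha : Rabs (c * sinh u) = sqrt ((c * sinh u) ^ 2)).
    { rewrite <- sqrt_Rsqr_abs. unfold Rsqr. f_equal. ring. }
    pose proof (Rle_abs (- (c * sinh u))). rewrite Rabs_Ropp in H. lra. }
  apply ln_le'; auto.
  rewrite <- sinh_cosh_exp, Rmult_plus_distr_l, c_cosh by lra.
  apply Rplus_le_compat_l. apply sqrt_le_1_alt. nra.
Qed.

Lemma F_lt_id c u : 0 < c < 1 -> 0 < u -> F c u < u.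
Proof.
  intros Hc Hu. unfold F. rewrite <- (arcsinh_sinh u) at 2. apply arcsinh_lt.
  pose proof (sinh_pos u Hu). nra.
Qed.

Lemma F_gt_id c u : 1 < c -> 0 < u -> u < F c u.
Proof.
  intros Hc Hu. unfold F. rewrite <- (arcsinh_sinh u) at 1. apply arcsinh_lt.
  pose proof (sinh_pos u Hu). nra.
Qed.

Lemma F_ivt c k a b : 0 < a -> 0 < b -> (F c a - k * a) * (F c b - k * b) <= 0 ->
  exists z, 0 < z /\ F c z = k * z.
Proof.
  intros Ha Hb H.
  assert (Hcont : continuity (fun u => F c u - k * u)).
  { intros x. apply derivable_continuous_pt. exists (D c x - k * 1).
    apply (derivable_pt_lim_minus (F c) (fun u => k * u)).
    - apply F_deriv.
    - apply (derivable_pt_lim_scal id k x). apply derivable_pt_lim_id. }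
  destruct (Rle_dec a b) as [Hab|Hab].
  - destruct (IVT_cor _ a b Hcont Hab H) as (z & Hz & Ez).
    exists z; split; lra.
  - assert (Hba : b <= a) by lra. rewrite Rmult_comm in H.
    destruct (IVT_cor _ b a Hcont Hba H) as (z & Hz & Ez).
    exists z; split; lra.
Qed.


Lemma ratio_eq c t : 0 < c -> 0 < t -> ratioP c t = F c (t/2) / (c * (t / 2)).
Proof. intros. unfold ratioP, fP, gP, F. field. lra. Qed.

Lemma sqrt_ge1 x : 0 <= x -> 1 <= sqrt (x + 1).
Proof. intros. rewrite <- sqrt_1 at 1. apply sqrt_le_1_alt. lra. Qed.

Lemma part_small_inc c y : 0 < c < 1 -> 1 < y ->
  exists a, 0 < a /\ F c a < c * y * a.
Proof.
  intros Hc Hy.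
  set (w := sqrt (y * y - 1)).
  assert (Hw : w * w = y * y - 1) by (unfold w; rewrite sqrt_sqrt; nra).
  assert (w0 : 0 < w) by (unfold w; apply sqrt_lt_R0; nra).
  set (a := arcsinh w).
  assert (Sa : sinh a = w) by (unfold a; apply sinh_arcsinh).
  assert (a0 : 0 < a) by (unfold a; rewrite <- arcsinh_0; apply arcsinh_lt; lra).
  assert (Ca : cosh a = y).
  { pose proof (cosh_sq a) as E. rewrite Sa, Hw in E. pose proof (cosh_pos a). nra. }
  exists a. split; auto.
  destruct (convF_inc c Hc) as [_ B]. destruct (B a a0) as [_ B2].
  assert (D c a <= c * y).
  { unfold D. rewrite Ca. set (P := sqrt ((c * sinh a) ^ 2 + 1)).
    assert (1 <= P) by (apply sqrt_ge1; apply pow2_ge_0).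
    assert (E : c * y / P * P = c * y) by (field; lra).
    assert (0 <= c * y / P) by (apply Rle_mult_inv_pos; nra).
    nra. }
  nra.
Qed.

Lemma part_small_dec c y : 1 < c -> 1 / c < y < 1 ->
  exists a, 0 < a /\ c * y * a < F c a.
Proof.
  intros Hc Hy.
  assert (Hcy : 1 < c * y).
  { assert (E : 1 / c * c = 1) by (field; lra). nra. }
  assert (y0 : 0 < y) by (assert (0 < 1/c) by (apply Rdiv_lt_0_compat; lra); lra).
  set (w := sqrt (1 - y * y) / (c * y)).
  assert (Hw : w * w * (c * y) * (c * y) = 1 - y * y).
  { unfold w. replace (sqrt (1 - y * y) / (c * y) * (sqrt (1 - y * y) / (c * y)) * (c * y) * (c * y))
      with (sqrt (1 - y * y) * sqrt (1 - y * y)) by (field; nra).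
    rewrite sqrt_sqrt; nra. }
  assert (w0 : 0 < w) by (unfold w; apply Rdiv_lt_0_compat; [apply sqrt_lt_R0|]; nra).
  set (a := arcsinh w).
  assert (Sa : sinh a = w) by (unfold a; apply sinh_arcsinh).
  assert (a0 : 0 < a) by (unfold a; rewrite <- arcsinh_0; apply arcsinh_lt; lra).
  exists a. split; auto.
  destruct (convF_dec c Hc) as [_ B]. destruct (B a a0) as [_ B2].
  assert (c * y < D c a).
  { unfold D. rewrite Sa. set (P := sqrt ((c * w) ^ 2 + 1)).
    assert (HP : P * P = c * c * (w * w) + 1) by (unfold P; rewrite sqrt_sqrt; nra).
    assert (P0 : 0 < P) by (unfold P; apply sqrt_lt_R0; nra).
    pose proof (cosh_sq a) as E. rewrite Sa in E. pose proof (cosh_pos a).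
    assert (K : c * y * P < c * cosh a).
    { apply sq_lt; try nra.
      assert (E1 : c * y * P * (c * y * P) = c * c) by (replace (c * y * P * (c * y * P)) with (c * c * y * y * (P * P)) by ring; rewrite HP; nra).
      assert (E2 : c * cosh a * (c * cosh a) = c * c * (1 + w * w)) by (replace (c * cosh a * (c * cosh a)) with (c * c * (cosh a * cosh a)) by ring; rewrite E; ring).
      rewrite E1, E2. nra. }
    replace (c * y) with (c * y * P / P) by (field; lra).
    apply div_lt; auto; nra. }
  nra.
Qed.

Theorem proposition3p5 :
  (forall c : R, 0 < c < 1 ->
     (forall s t : R, 0 < s -> s < t -> ratioP c s < ratioP c t) /\
     (forall y : R, (1 < y < 1 / c) <-> (exists t : R, 0 < t /\ ratioP c t = y))) /\
  (forall c : R, 1 < c ->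
     (forall s t : R, 0 < s -> s < t -> ratioP c t < ratioP c s) /\
     (forall y : R, (1 / c < y < 1) <-> (exists t : R, 0 < t /\ ratioP c t = y))) /\
  (forall c t : R, 0 < c < 1 -> 0 <= t ->
     c * t <= 2 * arcsinh (c * sinh (t / 2)) <= t) /\
  (forall c t : R, 1 < c -> 0 <= t ->
     t <= 2 * arcsinh (c * sinh (t / 2)) <= c * t).
Proof.
  split; [|split; [|split]].
  - intros c Hc. destruct (convF_inc c Hc) as [A B]. split.
    + intros s t Hs Hst. rewrite !ratio_eq by lra.
      apply div_lt; try nra.
      specialize (A (s/2) (t/2) ltac:(lra) ltac:(lra)). nra.
    + intros y. split.
      * intros Hy.
        set (k := c * y).
        destruct (part_small_inc c y Hc (proj1 Hy)) as (a & a0 & Ga).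
        assert (lnc : ln c < 0) by (rewrite <- ln_1; apply ln_increasing; lra).
        assert (k1 : k < 1).
        { unfold k. assert (E : 1 / c * c = 1) by (field; lra). nra. }
        set (b := (1 - ln c) / (1 - k)).
        assert (b0 : 0 < b) by (unfold b; apply Rdiv_lt_0_compat; lra).
        assert (Eb : b * (1 - k) = 1 - ln c) by (unfold b; field; lra).
        pose proof (F_log_lo c b ltac:(lra)).
        destruct (F_ivt c k a b a0 b0) as (z & z0 & Ez).
        { assert (F c a - k * a < 0) by (unfold k; lra).
          assert (0 < F c b - k * b) by nra. nra. }
        exists (2 * z). split; [lra|]. rewrite ratio_eq by lra.
        replace (2 * z / 2) with z by field. rewrite Ez. unfold k. field. lra.
      * intros (t & t0 & Et). rewrite ratio_eq in Et by lra.
        destruct (B (t/2) ltac:(lra)) as [B1 _].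
        pose proof (F_lt_id c (t/2) Hc ltac:(lra)).
        set (r := F c (t / 2) / (c * (t / 2))) in Et.
        assert (Er : F c (t/2) = r * (c * (t/2))) by (unfold r; field; lra).
        assert (E : 1 / c * c = 1) by (field; lra).
        assert (cu : 0 < c * (t/2)) by nra.
        subst y. clearbody r. split.
        -- apply (Rmult_lt_reg_r (c * (t/2))); lra.
        -- assert (r * c < 1).
           { apply (Rmult_lt_reg_r (t/2)); [lra|]. nra. }
           apply (Rmult_lt_reg_r c); lra.
  - intros c Hc. destruct (convF_dec c Hc) as [A B]. split.
    + intros s t Hs Hst. rewrite !ratio_eq by lra.
      apply div_lt; try nra.
      specialize (A (s/2) (t/2) ltac:(lra) ltac:(lra)). nra.
    + intros y. split.
      * intros Hy.
        set (k := c * y).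
        destruct (part_small_dec c y Hc Hy) as (a & a0 & Ga).
        assert (lnc : 0 < ln c) by (rewrite <- ln_1; apply ln_increasing; lra).
        assert (k1 : 1 < k).
        { unfold k. assert (E : 1 / c * c = 1) by (field; lra). nra. }
        set (b := (ln c + 1) / (k - 1)).
        assert (b0 : 0 < b) by (unfold b; apply Rdiv_lt_0_compat; lra).
        assert (Eb : b * (k - 1) = ln c + 1) by (unfold b; field; lra).
        pose proof (F_log_hi c b ltac:(lra)).
        destruct (F_ivt c k a b a0 b0) as (z & z0 & Ez).
        { assert (0 < F c a - k * a) by (unfold k; lra).
          assert (F c b - k * b < 0) by nra. nra. }
        exists (2 * z). split; [lra|]. rewrite ratio_eq by lra.
        replace (2 * z / 2) with z by field. rewrite Ez. unfold k. field. lra.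
      * intros (t & t0 & Et). rewrite ratio_eq in Et by lra.
        destruct (B (t/2) ltac:(lra)) as [B1 _].
        pose proof (F_gt_id c (t/2) Hc ltac:(lra)).
        set (r := F c (t / 2) / (c * (t / 2))) in Et.
        assert (Er : F c (t/2) = r * (c * (t/2))) by (unfold r; field; lra).
        assert (E : 1 / c * c = 1) by (field; lra).
        assert (cu : 0 < c * (t/2)) by nra.
        subst y. clearbody r. split.
        -- assert (1 < r * c).
           { apply (Rmult_lt_reg_r (t/2)); [lra|]. nra. }
           apply (Rmult_lt_reg_r c); lra.
        -- apply (Rmult_lt_reg_r (c * (t/2))); lra.
  - intros c t Hc [Ht|Ht].
    + change (arcsinh (c * sinh (t / 2))) with (F c (t/2)).
      destruct (convF_inc c Hc) as [_ B]. destruct (B (t/2) ltac:(lra)) as [B1 _].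
      pose proof (F_lt_id c (t/2) Hc ltac:(lra)). lra.
    + subst t. replace (0/2) with 0 by field. rewrite sinh_0, Rmult_0_r, arcsinh_0. lra.
  - intros c t Hc [Ht|Ht].
    + change (arcsinh (c * sinh (t / 2))) with (F c (t/2)).
      destruct (convF_dec c Hc) as [_ B]. destruct (B (t/2) ltac:(lra)) as [B1 _].
      pose proof (F_gt_id c (t/2) Hc ltac:(lra)). lra.
    + subst t. replace (0/2) with 0 by field. rewrite sinh_0, Rmult_0_r, arcsinh_0. lra.
Qed.
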